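(* Let $n$ and $m$ be integers with $n\geq 5$ and $m\geq 5$. Let $G\in T_{n,m}$, and let $v$ be a vertex of $G$ of degree $1$ whose unique neighbor is the terminal $s$. If $G-sv$ is complete, then there exists $H\in T_{n,m}$ that is $3$-stronger than $G$.
   Context: All graphs are finite, simple and undirected. A two-terminal graph is a graph $G$ together with two distinguished vertices $s,t$ (the terminals). $T_{n,m}$ denotes the set of all pairwise nonisomorphic (with isomorphisms preserving the set of terminals) two-terminal graphs with $n$ vertices and $m$ edges. A two-terminal graph is called complete if the connected component containing both terminals is a complete graph. $G-sv$ is the two-terminal graph obtained from $G$ by deleting the edge $sv$. For a positive integer $d$, a $d$-pathset of a two-terminal graph $G$ is a spanning subgraph of $G$ containing a path of length (number of edges) at most $d$ joining $s$ and $t$; $N_i^d(G)$ is the number of $d$-pathsets of $G$ with exactly $i$ edges. For $G,H\in T_{n,m}$, $H$ is $d$-stronger than $G$ if $N_i^d(H)\geq N_i^d(G)$ for every $i\in\{1,\ldots,m\}$ and $N_j^d(H)>N_j^d(G)$ for some $j\in\{1,\ldots,m\}$. *)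

(* Defs.v *)
From mathcomp Require Import all_boot.
Set Implicit Arguments. Unset Strict Implicit. Unset Printing Implicit Defensive.

(* A two-terminal graph on the vertex set 'I_n is given by an edge set
   E : {set {set 'I_n}} (each edge a 2-element set) and terminals s, t. *)

Definition adj n (E : {set {set 'I_n}}) : rel 'I_n :=
  fun x y => [set x; y] \in E.

Definition is_tgraph n m (E : {set {set 'I_n}}) (s t : 'I_n) : bool :=
  [&& [forall e in E, #|e| == 2], s != t & #|E| == m].

Definition has_dpath n (d : nat) (F : {set {set 'I_n}}) (s t : 'I_n) : bool :=
  [exists k : 'I_d.+1, [exists p : k.-tuple 'I_n,
     [&& path (adj F) s p, last s p == t & uniq (s :: p)]]].

Definition Npath n (d : nat) (E : {set {set 'I_n}}) (s t : 'I_n) (i : nat) : nat :=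
  #|[set F in powerset E | (#|F| == i) && has_dpath d F s t]|.

Definition stronger n m (d : nat) (EH : {set {set 'I_n}}) (sH tH : 'I_n)
  (EG : {set {set 'I_n}}) (sG tG : 'I_n) : Prop :=
  (forall i, 1 <= i <= m -> Npath d EG sG tG i <= Npath d EH sH tH i) /\
  (exists j, 1 <= j <= m /\ Npath d EG sG tG j < Npath d EH sH tH j).

Definition complete_tgraph n (E : {set {set 'I_n}}) (s t : 'I_n) : Prop :=
  connect (adj E) s t /\
  (forall x y, connect (adj E) s x -> connect (adj E) s y -> x != y ->
     [set x; y] \in E).

Definition deg n (E : {set {set 'I_n}}) (v : 'I_n) : nat :=
  #|[set u | [set v; u] \in E]|.

(* Main.v *)
Require Import Defs.
From mathcomp Require Import all_boot.
From mathcomp Require Import all_fingroup.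
Set Implicit Arguments. Unset Strict Implicit. Unset Printing Implicit Defensive.

Section Basic.
Variable n : nat.
Implicit Types (F E : {set {set 'I_n}}) (a b c d s t : 'I_n).

Lemma set2_inv a b c d : [set a; b] = [set c; d] -> (a = c /\ b = d) \/ (a = d /\ b = c).
Proof.
move/setP=> H.
have Ha := esym (H a); have Hb := esym (H b); have Hc := H c; have Hd := H d.
rewrite !inE !eqxx ?orbT /= in Ha Hb Hc Hd.
case/orP: Ha => /eqP Ea; case/orP: Hb => /eqP Eb; subst; auto.
- by case/orP: Hd => /eqP ->; auto.
- by case/orP: Hc => /eqP ->; auto.
Qed.

Lemma set2_l a b d : [set a; b] = [set a; d] -> b = d.
Proof. by case/set2_inv => [[_ ->]|[-> ->]]. Qed.

Definition W F s t : bool :=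
  [|| [set s; t] \in F,
      [exists a, ([set s; a] \in F) && ([set a; t] \in F)] |
      [exists a, exists b, [&& [set s; a] \in F, [set a; b] \in F & [set b; t] \in F]]].

Lemma W_mono F1 F2 s t : F1 \subset F2 -> W F1 s t -> W F2 s t.
Proof.
move/subsetP=> sub.
case/or3P=> [H|/existsP[a /andP[H1 H2]]|/existsP[a /existsP[b /and3P[H1 H2 H3]]]].
- by rewrite /W (sub _ H).
- by apply/or3P; apply: Or32; apply/existsP; exists a; rewrite !sub.
- by apply/or3P; apply: Or33; apply/existsP; exists a; apply/existsP; exists b; rewrite !sub.
Qed.

Lemma dpath_W F s t : s != t -> has_dpath 3 F s t -> W F s t.
Proof.
move=> st /existsP[[k Hk]] /existsP[[p /= /eqP Hsz]] /and3P[Hp Hl Hu].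
move: Hk; rewrite -Hsz; move: Hp Hl Hu.
case: p {Hsz} => [|a [|b [|c [|d p]]]] //=.
- by move=> _ /eqP Est; rewrite Est eqxx in st.
- by rewrite /adj andbT => H /eqP Ea; rewrite -Ea /W H.
- rewrite /adj andbT => /andP[H1 H2] /eqP Eb; subst b.
  by move=> _ _; apply/or3P; apply: Or32; apply/existsP; exists a; rewrite H1 H2.
- rewrite /adj andbT => /and3P[H1 H2 H3] /eqP Ec; subst c.
  by move=> _ _; apply/or3P; apply: Or33; apply/existsP; exists a; apply/existsP; exists b; rewrite H1 H2 H3.
Qed.

Lemma W_dpath F s t : s != t -> (forall x, [set x; x] \notin F) -> W F s t -> has_dpath 3 F s t.
Proof.
move=> st Hl.
have c1 : [set s; t] \in F -> has_dpath 3 F s t.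
  move=> H; apply/existsP; exists (@Ordinal 4 1 isT); apply/existsP; exists [tuple t].
  by rewrite /= /adj H eqxx inE st.
case/or3P=> [H|/existsP[a /andP[H1 H2]]|/existsP[a /existsP[b /and3P[H1 H2 H3]]]].
- exact: c1.
- have sa : s != a by apply/eqP=> E; subst a; rewrite (negbTE (Hl _)) in H1.
  have at_ : a != t by apply/eqP=> E; subst a; rewrite (negbTE (Hl _)) in H2.
  apply/existsP; exists (@Ordinal 4 2 isT); apply/existsP; exists [tuple a; t].
  by rewrite /= /adj H1 H2 eqxx !inE negb_or sa st at_.
- case: (boolP ([set s; t] \in F)) => [H|nst]; first exact: c1.
  have sa : s != a by apply/eqP=> E; subst a; rewrite (negbTE (Hl _)) in H1.
  have ab : a != b by apply/eqP=> E; subst a; rewrite (negbTE (Hl _)) in H2.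
  have bt : b != t by apply/eqP=> E; subst b; rewrite (negbTE (Hl _)) in H3.
  have at_ : a != t by apply/eqP=> E; subst a; rewrite H1 in nst.
  have sb : s != b by apply/eqP=> E; subst b; rewrite H3 in nst.
  apply/existsP; exists (@Ordinal 4 3 isT); apply/existsP; exists [tuple a; b; t].
  by rewrite /= /adj H1 H2 H3 eqxx !inE !negb_or sa sb st ab at_ bt.
Qed.

End Basic.


Section Frame.
Variable n : nat.
Notation ES := {set {set 'I_n}}.
Variables (C : ES) (g h : {set 'I_n}) (P : pred ES) (psi : ES -> ES).
Hypothesis gC : g \notin C.
Hypothesis hC : h \notin C.
Hypothesis Pmono : forall A B : ES, A \subset B -> P A -> P B.
Definition Dom (F0 : ES) := [&& F0 \subset C, ~~ P F0 & P (g |: F0)].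
Hypothesis psiP : forall F0 : ES, Dom F0 ->
  [&& psi F0 \subset C, #|psi F0| == #|F0|, ~~ P (psi F0) & P (h |: psi F0)].
Hypothesis psi_inj : forall F1 F2 : ES, Dom F1 -> Dom F2 -> psi F1 = psi F2 -> F1 = F2.

Definition Phi (F : ES) := if g \in F then (if P (F :\ g) then h |: (F :\ g) else h |: psi (F :\ g)) else F.
Definition SS i (X : ES) := [set F in powerset X | (#|F| == i) && P F].

Lemma sub_setD1 (F : ES) : F \subset g |: C -> F :\ g \subset C.
Proof.
move/subsetP=> H; apply/subsetP=> x; rewrite !inE => /andP[xg /H].
by rewrite in_setU1 (negbTE xg).
Qed.

Lemma notin_sub x (F : ES) : F \subset C -> x \notin C -> x \notin F.
Proof. by move/subsetP=> H xC; apply/negP=> /H; rewrite (negbTE xC). Qed.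

Lemma sub_notin (F : ES) : F \subset g |: C -> g \notin F -> F \subset C.
Proof.
move/subsetP=> sF gF; apply/subsetP=> x xF; move: (sF x xF); rewrite in_setU1.
by case/orP=> [/eqP E|//]; subst x; rewrite xF in gF.
Qed.

Lemma Phi_in i (F : ES) : F \in SS i (g |: C) -> Phi F \in SS i (h |: C).
Proof.
rewrite !inE => /andP[sF /andP[/eqP cF PF]].
rewrite /Phi; case: (boolP (g \in F)) => gF.
- have sD := sub_setD1 sF.
  have cD : #|F :\ g| = i.-1 by move: (cardsD1 g F); rewrite gF cF => ->.
  have i0 : 0 < i by move: (cardsD1 g F); rewrite gF cF => ->.
  case: (boolP (P (F :\ g))) => PD.
  + apply/and3P; split; first exact: setUS.
      by rewrite cardsU1 (notin_sub sD hC) cD add1n prednK.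
    apply: Pmono PD; exact: subsetUr.
  + have DF : Dom (F :\ g) by rewrite /Dom sD PD /= setD1K.
    case/and4P: (psiP DF) => s1 /eqP c1 _ p1.
    apply/and3P; split=> //; first exact: setUS.
    by rewrite cardsU1 (notin_sub s1 hC) c1 cD add1n prednK.
- rewrite cF eqxx PF andbT andbT.
  apply/subsetP=> x xF; move/subsetP: sF => /(_ x xF); rewrite !inE.
  by case/orP=> [/eqP E|->]; [subst x; rewrite xF in gF|rewrite orbT].
Qed.

Lemma Phi_inj i : {in SS i (g |: C) &, injective Phi}.
Proof.
move=> F1 F2; rewrite !inE => /andP[s1 /andP[_ P1]] /andP[s2 /andP[_ P2]].
have genD (F : ES) : F \subset g |: C -> g \in F -> P F -> ~~ P (F :\ g) -> Dom (F :\ g).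
  by move=> sF gF PF nP; rewrite /Dom sub_setD1 // nP /= setD1K.
rewrite /Phi.
case: (boolP (g \in F1)) => g1; case: (boolP (g \in F2)) => g2 //.
- have d1 := sub_setD1 s1; have d2 := sub_setD1 s2.
  case: (boolP (P (F1 :\ g))) => q1; case: (boolP (P (F2 :\ g))) => q2.
  + move=> E; have := congr1 (fun X => X :\ h) E; rewrite /= !setU1K ?(notin_sub _ hC) //.
    by move=> E2; rewrite -(setD1K g1) -(setD1K g2) E2.
  + have D2 := genD _ s2 g2 P2 q2; case/and4P: (psiP D2) => ps2 _ np2 _.
    move=> E; have := congr1 (fun X => X :\ h) E; rewrite /= !setU1K ?(notin_sub _ hC) //.
    by move=> E2; rewrite -E2 q1 in np2.
  + have D1 := genD _ s1 g1 P1 q1; case/and4P: (psiP D1) => ps1 _ np1 _.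
    move=> E; have := congr1 (fun X => X :\ h) E; rewrite /= !setU1K ?(notin_sub _ hC) //.
    by move=> E2; rewrite E2 q2 in np1.
  + have D1 := genD _ s1 g1 P1 q1; case/and4P: (psiP D1) => ps1 _ np1 _.
    have D2 := genD _ s2 g2 P2 q2; case/and4P: (psiP D2) => ps2 _ np2 _.
    move=> E; have := congr1 (fun X => X :\ h) E; rewrite /= !setU1K ?(notin_sub _ hC) //.
    by move/(psi_inj D1 D2)=> E2; rewrite -(setD1K g1) -(setD1K g2) E2.
- move=> E; have : h \in F2.
    by rewrite -E; case: ifP => _; rewrite setU11.
  by rewrite (negbTE (notin_sub (sub_notin s2 g2) hC)).
- move=> E; have : h \in F1.
    by rewrite E; case: ifP => _; rewrite setU11.
  by rewrite (negbTE (notin_sub (sub_notin s1 g1) hC)).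
Qed.

Lemma frame_le i : #|SS i (g |: C)| <= #|SS i (h |: C)|.
Proof.
rewrite -(card_in_imset (@Phi_inj i)); apply: subset_leq_card.
by apply/subsetP=> _ /imsetP[F HF ->]; apply: Phi_in.
Qed.

Lemma frame_lt (F1 : ES) : F1 \subset C -> ~~ P F1 -> P (h |: F1) ->
  (forall F0, Dom F0 -> psi F0 != F1) ->
  #|SS #|F1|.+1 (g |: C)| < #|SS #|F1|.+1 (h |: C)|.
Proof.
move=> sF1 nP1 P1 Hpsi.
rewrite -(card_in_imset (@Phi_inj _)); apply: proper_card; apply/properP; split.
  by apply/subsetP=> _ /imsetP[F HF ->]; apply: Phi_in.
exists (h |: F1).
  by rewrite !inE P1 cardsU1 (notin_sub sF1 hC) eqxx andbT setUS.
apply/negP=> /imsetP[F]; rewrite !inE => /andP[sF /andP[_ PF]].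
rewrite /Phi; case: (boolP (g \in F)) => gF.
- have dF := sub_setD1 sF.
  case: (boolP (P (F :\ g))) => q.
  + move=> E; have := congr1 (fun X => X :\ h) E; rewrite /= !setU1K ?(notin_sub _ hC) //.
    by move=> E2; rewrite E2 q in nP1.
  + have DF : Dom (F :\ g) by rewrite /Dom dF q /= setD1K.
    case/and4P: (psiP DF) => ps _ _ _.
    move=> E; have := congr1 (fun X => X :\ h) E; rewrite /= !setU1K ?(notin_sub _ hC) //.
    by move=> E2; move: (Hpsi _ DF); rewrite E2 eqxx.
- move=> E; have : h \in F by rewrite -E setU11.
  have sC := sub_notin sF gF.
  by rewrite (negbTE (notin_sub sC hC)).
Qed.

End Frame.


Lemma dpath_mono n (A B : {set {set 'I_n}}) s t : A \subset B -> has_dpath 3 A s t -> has_dpath 3 B s t.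
Proof.
move/subsetP=> sub /existsP[k /existsP[p /and3P[Hp Hl Hu]]].
apply/existsP; exists k; apply/existsP; exists p; rewrite Hl Hu andbT.
rewrite andbT; apply: (sub_path _ Hp) => x y; rewrite /adj => /sub; exact.
Qed.

Section Main.
Variables (n m : nat) (E : {set {set 'I_n}}) (s t v : 'I_n).
Notation ES := {set {set 'I_n}}.
Hypothesis Hm : 5 <= m.
Hypothesis Hg : is_tgraph m E s t.
Hypothesis Hdeg : deg E v = 1.
Hypothesis Hsv : [set s; v] \in E.
Hypothesis Hc : complete_tgraph (E :\ [set s; v]) s t.

Lemma H2 e : e \in E -> #|e| == 2.
Proof. by case/and3P: Hg => /forall_inP H _ _; apply: H. Qed.
Lemma st : s != t.
Proof. by case/and3P: Hg. Qed.
Lemma cE : #|E| = m.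
Proof. by case/and3P: Hg => _ _ /eqP. Qed.
Lemma nb u : [set v; u] \in E -> u = s.
Proof.
move=> Hu; move: Hdeg; rewrite /deg => /eqP/cards1P[x Ex].
have : s \in [set u | [set v; u] \in E] by rewrite inE setUC.
have : u \in [set u | [set v; u] \in E] by rewrite inE.
by rewrite Ex !inE => /eqP -> /eqP ->.
Qed.
Lemma notloop x : [set x; x] \notin E.
Proof. by apply/negP=> /H2; rewrite cards2 eqxx. Qed.
Lemma sv : s != v.
Proof. by apply/eqP=> E1; move: (notloop s); rewrite {2}E1 Hsv. Qed.

Definition E' := E :\ [set s; v].
Definition Sc := [set x | connect (adj E') s x].

Lemma adj_sym (F : ES) : symmetric (adj F).
Proof. by move=> x y; rewrite /adj setUC. Qed.

Lemma sS : s \in Sc.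
Proof. by rewrite inE connect0. Qed.
Lemma tS : t \in Sc.
Proof. by case: Hc => H _; rewrite inE. Qed.
Lemma vS : v \notin Sc.
Proof.
rewrite inE (sym_connect_sym (@adj_sym _)); apply/negP.
case/connectP=> [[|x p]] /=.
  by move=> _ E1; move: sv; rewrite E1 eqxx.
case/andP=> Hx _ _; move: Hx; rewrite /adj /E' in_setD1 => /andP[ne /nb Ex].
by subst x; rewrite setUC eqxx in ne.
Qed.
Lemma vt : v != t.
Proof. by apply/eqP=> E1; move: vS; rewrite E1 tS. Qed.
Lemma hE : [set v; t] \notin E.
Proof. by apply/negP=> /nb E1; move: st; rewrite E1 eqxx. Qed.
Lemma clos a b : [set a; b] \in E' -> a \in Sc -> b \in Sc.
Proof.
move=> H; rewrite !inE => Ha; apply: connect_trans Ha _; exact: (@connect1 _ (adj E') a b H).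
Qed.
Lemma compl x y : x \in Sc -> y \in Sc -> x != y -> [set x; y] \in E.
Proof.
case: Hc => _ H; rewrite !inE => hx hy xy.
by have := H x y hx hy xy; rewrite in_setD1 => /andP[].
Qed.

Definition PP (F : ES) := has_dpath 3 F s t.

Lemma PW (F : ES) : F \subset [set v; t] |: E -> PP F = W F s t.
Proof.
move/subsetP=> sub; apply/idP/idP; first exact: dpath_W st.
apply: W_dpath st _ => x; apply/negP=> /sub; rewrite in_setU1 (negbTE (notloop x)) orbF.
by move/eqP/esym/set2_inv=> [[E1 E2]|[E1 E2]]; move: vt; rewrite E1 E2 eqxx.
Qed.

Lemma PPmono (A B : ES) : A \subset B -> PP A -> PP B.
Proof. exact: dpath_mono. Qed.

Lemma Wsv : ~~ W [set [set s; v]] s t.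
Proof.
apply/or3P=> [[H|/existsP[a /andP[H1 H2]]|/existsP[a /existsP[b /and3P[H1 H2 H3]]]]].
- move: H; rewrite in_set1 => /eqP/set2_l E1; by move: vt; rewrite E1 eqxx.
- move: H2; rewrite in_set1 => /eqP/set2_inv [[_ E1]|[_ E1]]; move: vt st; rewrite E1 eqxx //.
- move: H3; rewrite in_set1 => /eqP/set2_inv [[_ E1]|[_ E1]]; move: vt st; rewrite E1 eqxx //.
Qed.

Lemma finish (g : {set 'I_n}) (psi : ES -> ES) : g \in E -> g != [set s; v] ->
  (forall F0, Dom (E :\ g) g PP F0 ->
    [&& psi F0 \subset (E :\ g), #|psi F0| == #|F0|, ~~ PP (psi F0) & PP ([set v; t] |: psi F0)]) ->
  (forall F1 F2, Dom (E :\ g) g PP F1 -> Dom (E :\ g) g PP F2 -> psi F1 = psi F2 -> F1 = F2) ->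
  (forall F0, Dom (E :\ g) g PP F0 -> psi F0 != [set [set s; v]]) ->
  exists (EH : {set {set 'I_n}}) (sH tH : 'I_n),
    is_tgraph m EH sH tH /\ stronger m 3 EH sH tH E s t.
Proof.
move=> gE gsv psiP psi_inj psiN.
have gC : g \notin E :\ g by rewrite setD11.
have hC : [set v; t] \notin E :\ g by rewrite in_setD1 (negbTE hE) andbF.
have EE : E = g |: (E :\ g) by rewrite setD1K.
exists ([set v; t] |: (E :\ g)), s, t; split.
  apply/and3P; split; last first.
  - by rewrite cardsU1 hC -cE (cardsD1 g E) gE.
  - exact: st.
  apply/forall_inP=> e; rewrite in_setU1 => /orP[/eqP ->|]; first by rewrite cards2 vt.
  by rewrite in_setD1 => /andP[_ /H2].
have N i X : Npath 3 X s t i = #|SS PP i X| by [].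
split.
  move=> i _; rewrite !N {1}EE; exact: (frame_le hC PPmono psiP psi_inj).
exists 2; split; first by rewrite /= (leq_trans _ Hm).
have sF1 : [set [set s; v]] \subset E :\ g by rewrite sub1set in_setD1 eq_sym gsv Hsv.
have := frame_lt hC PPmono psiP psi_inj sF1.
rewrite cards1 !N -EE; apply.
- rewrite PW ?Wsv //; apply: subset_trans sF1 _; apply: subset_trans (subsetDl _ _) _; exact: subsetUr.
- rewrite PW; last first.
    by rewrite setUS //; apply: subset_trans sF1 (subsetDl _ _).
  apply/or3P; apply: Or32; apply/existsP; exists v.
  by rewrite !in_setU1 !in_set1 !eqxx /= orbT.
- exact: psiN.
Qed.

Lemma subE (F : ES) g : F \subset E :\ g -> F \subset [set v; t] |: E.
Proof. by move=> H; apply: subset_trans H _; apply: subset_trans (subsetDl _ _) _; exact: subsetUr. Qed.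

Lemma subE1 (F : ES) g : g \in E -> F \subset E :\ g -> g |: F \subset [set v; t] |: E.
Proof.
move=> gE H; apply/subsetP=> x; rewrite in_setU1 => /orP[/eqP->|xF].
  by rewrite in_setU1 gE orbT.
by move/subsetP: (subE H) => /(_ x xF).
Qed.

Lemma memL x y (e : {set 'I_n}) : [set x; y] = e -> x \in e.
Proof. by move=> <-; rewrite !inE eqxx. Qed.
Lemma memR x y (e : {set 'I_n}) : [set x; y] = e -> y \in e.
Proof. by move=> <-; rewrite !inE eqxx orbT. Qed.

Lemma caseA e u : e \in E' -> u \in e -> u \notin Sc ->
  exists (EH : {set {set 'I_n}}) (sH tH : 'I_n),
    is_tgraph m EH sH tH /\ stronger m 3 EH sH tH E s t.
Proof.
rewrite /E' in_setD1 => /andP[esv eE] ue uS.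
have eE' : e \in E' by rewrite /E' in_setD1 esv eE.
case/cards2P: (H2 eE) => a [b [ab Ee]].
have out : forall w, w \in e -> w \notin Sc.
  have ab1 : a \in Sc -> b \in Sc by apply: clos; rewrite -Ee.
  have ba1 : b \in Sc -> a \in Sc by apply: clos; rewrite setUC -Ee.
  move=> w; rewrite Ee in_set2 => /orP[/eqP->|/eqP->]; apply/negP=> Hw;
  move: ue uS; rewrite Ee in_set2 => /orP[/eqP->|/eqP->]; by [rewrite Hw | rewrite (ab1 Hw) | rewrite (ba1 Hw)].
have nse : s \notin e by apply/negP=> /out; rewrite sS.
have nte : t \notin e by apply/negP=> /out; rewrite tS.
have nve : v \notin e.
  apply/negP; rewrite Ee in_set2 => /orP[/eqP E1|/eqP E1].
  - have := @nb b; rewrite E1 -Ee => /(_ eE) Eb.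
    by move: nse; rewrite Ee in_set2 -Eb eqxx orbT.
  - have := @nb a; rewrite E1 setUC -Ee => /(_ eE) Eb.
    by move: nse; rewrite Ee in_set2 -Eb eqxx.
have sx x : x \in e -> [set s; x] \in E -> False.
  move=> xe sxE; case: (eqVneq [set s; x] [set s; v]) => [/set2_l E1|ne].
    by rewrite -E1 xe in nve.
  have : x \in Sc by apply: (clos (a:=s)); [rewrite /E' in_setD1 ne sxE | exact: sS].
  by rewrite (negbTE (out _ xe)).
have key : forall F0 : ES, F0 \subset E :\ e -> W (e |: F0) s t -> W F0 s t.
  move=> F0 sF0; move/subsetP: (sF0) => sF.
  have inE0 f : f \in F0 -> f \in E by move/sF; rewrite in_setD1 => /andP[].
  case/or3P=> [H|/existsP[c /andP[H1 H2]]|/existsP[c /existsP[d /and3P[H1 H3 H4]]]].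
  - move: H; rewrite in_setU1 => /orP[/eqP/memL|H]; first by rewrite (negbTE nse).
    by rewrite /W H.
  - move: H1 H2; rewrite !in_setU1 => /orP[/eqP/memL|H1]; first by rewrite (negbTE nse).
    case/orP=> [/eqP/memR|H2]; first by rewrite (negbTE nte).
    by apply/or3P; apply: Or32; apply/existsP; exists c; rewrite H1 H2.
  - move: H1 H3 H4; rewrite !in_setU1 => /orP[/eqP/memL|H1]; first by rewrite (negbTE nse).
    case/orP=> [/eqP/memL ce|H3]; first by case: (sx c ce (inE0 _ H1)).
    case/orP=> [/eqP/memR|H4]; first by rewrite (negbTE nte).
    by apply/or3P; apply: Or33; apply/existsP; exists c; apply/existsP; exists d; rewrite H1 H3 H4.
have noD (F0 : ES) : ~~ Dom (E :\ e) e PP F0.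
  apply/negP; rewrite /Dom => /and3P[sF0 nP P1].
  move: nP P1; rewrite !PW ?(subE sF0) ?(subE1 eE sF0) // => nP /(key _ sF0).
  by rewrite (negbTE nP).
apply: (@finish e id) => //.
- by move=> F0 D0; move: (noD F0); rewrite D0.
- by move=> F0 D0; move: (noD F0); rewrite D0.
Qed.

Lemma W1 (F : ES) : [set s; t] \in F -> W F s t.
Proof. by move=> H; rewrite /W H. Qed.
Lemma W2 (F : ES) c : [set s; c] \in F -> [set c; t] \in F -> W F s t.
Proof. by move=> H1 H2; apply/or3P; apply: Or32; apply/existsP; exists c; rewrite H1 H2. Qed.
Lemma W3 (F : ES) c d : [set s; c] \in F -> [set c; d] \in F -> [set d; t] \in F -> W F s t.
Proof.
by move=> H1 H2 H3; apply/or3P; apply: Or33; apply/existsP; exists c; apply/existsP; exists d; rewrite H1 H2 H3.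
Qed.

Lemma pend (F F' : ES) : F \subset E -> F' \subset [set s; v] |: F -> W F' s t -> W F s t.
Proof.
move/subsetP=> sFE /subsetP sF'.
have inF f : f \in F' -> f = [set s; v] \/ f \in F.
  by move/sF'; rewrite in_setU1 => /orP[/eqP|]; auto.
have i1 a : [set a; t] \in F' -> [set a; t] \in F.
  case/inF=> // /set2_inv [[_ E1]|[_ E1]]; by move: vt st; rewrite E1 eqxx // andbF.
have i2 a : [set s; a] \in F' -> a = v \/ [set s; a] \in F.
  by case/inF=> [/set2_l|]; auto.
have nvt : [set v; t] \notin F by apply/negP=> /sFE; rewrite (negbTE hE).
case/or3P=> [H|/existsP[a /andP[H1 H2]]|/existsP[a /existsP[b /and3P[H1 H2 H3]]]].
- exact: W1 (i1 _ H).
- have H2' := i1 _ H2; case: (i2 _ H1) => [E1|H1'].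
    by move: nvt; rewrite -E1 H2'.
  exact: W2 H1' H2'.
- have H3' := i1 _ H3; case: (i2 _ H1) => [E1|H1'].
    have Eb : b = s.
      move: H2; rewrite E1 => /inF [/set2_inv [[E2 _]|[_ ->]]|/sFE /nb] //.
      by move: sv; rewrite E2 eqxx.
    by apply: W1; rewrite -Eb.
  case: (inF _ H2) => [/set2_inv [[E2 E3]|[E2 E3]]|H2'].
  + by move: nvt; rewrite -E3 H3'.
  + by apply: W1; rewrite -E3.
  + exact: W3 H1' H2' H3'.
Qed.

Lemma swapP (g z : {set 'I_n}) (F0 : ES) : z \in F0 -> z \in E :\ g -> [set s; v] \in E :\ g ->
  F0 \subset E :\ g -> ~~ W F0 s t ->
  [&& (tperm [set s; v] z) @: F0 \subset E :\ g, #|(tperm [set s; v] z) @: F0| == #|F0|,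
      ~~ PP ((tperm [set s; v] z) @: F0) & PP ([set v; t] |: (tperm [set s; v] z) @: F0)].
Proof.
move=> zF zC svC sF0 nW.
set T := (tperm [set s; v] z) @: F0.
have sT : T \subset E :\ g.
  apply/subsetP=> _ /imsetP[f fF ->]; case: tpermP => [_|_|_ _]; [exact: zC|exact: svC|].
  by move/subsetP: sF0 => /(_ f fF).
have sT2 : T \subset [set s; v] |: F0.
  apply/subsetP=> _ /imsetP[f fF ->]; rewrite in_setU1; case: tpermP => [_|_|_ _].
  - by rewrite zF orbT.
  - by rewrite eqxx.
  - by rewrite fF orbT.
have svT : [set s; v] \in T by rewrite /T -{1}(tpermR [set s; v] z); apply: imset_f.
have sF0E : F0 \subset E by apply: subset_trans sF0 (subsetDl _ _).
rewrite sT card_imset ?eqxx; last exact: perm_inj.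
rewrite !PW.
- rewrite /=; apply/andP; split; first by apply/negP=> /(pend sF0E sT2); rewrite (negbTE nW).
  by apply: (W2 (c:=v)); rewrite !in_setU1 ?svT ?orbT ?eqxx.
- by apply: setUS; apply: subset_trans sT (subsetDl _ _).
- exact: subE sT.
Qed.

Lemma caseB : (forall e, e \in E' -> forall u, u \in e -> u \in Sc) ->
  exists (EH : {set {set 'I_n}}) (sH tH : 'I_n),
    is_tgraph m EH sH tH /\ stronger m 3 EH sH tH E s t.
Proof.
move=> allin.
have cE' : #|E'| = m.-1 by move: (cardsD1 [set s; v] E); rewrite Hsv cE => ->.
have le1 : #|E'| <= 'C(#|Sc|, 2).
  rewrite -cards_draws; apply: subset_leq_card; apply/subsetP=> e eE'.
  rewrite inE; apply/andP; split.
    by apply/subsetP=> u ue; apply: allin eE' u ue.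
  by apply: H2; move: eE'; rewrite /E' in_setD1 => /andP[].
have gt3 : 3 < #|Sc|.
  rewrite ltnNge; apply/negP=> le3.
  have := leq_trans le1 (leq_bin2l 2 le3); rewrite cE' /=.
  by move: Hm; case: m => [|[|[|[|[|k]]]]].
have ts : t \in Sc :\ s by rewrite in_setD1 eq_sym st tS.
have c2 : 1 < #|Sc :\ s :\ t|.
  move: gt3; rewrite (cardsD1 s Sc) sS (cardsD1 t (Sc :\ s)) ts.
  by rewrite !add1n !ltnS.
case/card_gt1P: c2 => x [y [xS yS xy]].
move: xS yS; rewrite !in_setD1 => /and3P[xt xs xS] /and3P[yt ys yS].
have xv : x != v by apply/eqP=> E1; move: vS; rewrite -E1 xS.
have yv : y != v by apply/eqP=> E1; move: vS; rewrite -E1 yS.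
set g := [set x; y].
have gE : g \in E by apply: compl.
have sg : s \notin g by rewrite in_set2 negb_or eq_sym xs eq_sym ys.
have tg : t \notin g by rewrite in_set2 negb_or eq_sym xt eq_sym yt.
have inC a b : a != b -> a \in Sc -> b \in Sc -> (s == a) || (s == b) -> [set a; b] \in E :\ g.
  move=> ab aS bS sab; rewrite in_setD1 compl // andbT.
  by apply/eqP=> E1; move: sg; rewrite -E1 in_set2 sab.
have sxC : [set s; x] \in E :\ g by apply: inC; rewrite ?sS ?xS ?eqxx // eq_sym.
have syC : [set s; y] \in E :\ g by apply: inC; rewrite ?sS ?yS ?eqxx // eq_sym.
have svC : [set s; v] \in E :\ g.
  by rewrite in_setD1 Hsv andbT; apply/eqP=> E1; move: sg; rewrite -E1 in_set2 eqxx.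
have gsv : g != [set s; v] by apply/eqP=> E1; move: sg; rewrite E1 in_set2 eqxx.
have nst a b : [set a; b] \in E :\ g -> [set a; b] \in [set v; t] |: E.
  by rewrite in_setD1 in_setU1 => /andP[_ ->]; rewrite orbT.
have char (F0 : ES) : F0 \subset E :\ g -> ~~ W F0 s t -> W (g |: F0) s t ->
    ([set s; x] \in F0 /\ [set y; t] \in F0) \/ ([set s; y] \in F0 /\ [set x; t] \in F0).
  move=> sF0 nW.
  case/or3P=> [H|/existsP[a /andP[H1 H2]]|/existsP[a /existsP[b /and3P[H1 H3 H4]]]].
  - move: H; rewrite in_setU1 => /orP[/eqP/memL|H]; first by rewrite (negbTE sg).
    by rewrite (W1 H) in nW.
  - move: H1 H2; rewrite !in_setU1 => /orP[/eqP/memL|H1]; first by rewrite (negbTE sg).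
    case/orP=> [/eqP/memR|H2]; first by rewrite (negbTE tg).
    by rewrite (W2 H1 H2) in nW.
  - move: H1 H3 H4; rewrite !in_setU1 => /orP[/eqP/memL|H1]; first by rewrite (negbTE sg).
    case/orP=> [/eqP|H3]; last first.
      by case/orP=> [/eqP/memR|H4]; [rewrite (negbTE tg) | rewrite (W3 H1 H3 H4) in nW].
    move/set2_inv=> [[Ea Eb]|[Ea Eb]]; rewrite Ea Eb in H1 *.
    + by case/orP=> [/eqP/memR|H4]; [rewrite (negbTE tg) | auto].
    + by case/orP=> [/eqP/memR|H4]; [rewrite (negbTE tg) | auto].
have ne2 (a b c d : 'I_n) : a != c -> a != d -> [set a; b] != [set c; d].
  by move=> ac ad; apply/eqP=> /set2_inv [[E1 _]|[E1 _]]; [move: ac|move: ad]; rewrite E1 eqxx.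
have ytsv : [set y; t] != [set s; v] by apply: ne2.
have ytsx : [set y; t] != [set s; x] by apply: ne2; rewrite // eq_sym.
have xtsv : [set x; t] != [set s; v] by apply: ne2.
have xtsy : [set x; t] != [set s; y] by apply: ne2.
have svyt : [set s; v] != [set y; t] by rewrite eq_sym.
have sxyt : [set s; x] != [set y; t] by rewrite eq_sym.
have svxt : [set s; v] != [set x; t] by rewrite eq_sym.
have syxt : [set s; y] != [set x; t] by rewrite eq_sym.
have syyt : [set s; y] != [set y; t].
  by apply/eqP=> /set2_inv [[E1 _]|[E1 _]]; [move: ys|move: st]; rewrite E1 eqxx.
have DomW (F0 : ES) : Dom (E :\ g) g PP F0 -> [/\ F0 \subset E :\ g, ~~ W F0 s t & W (g |: F0) s t].
  case/and3P=> sF0; rewrite !PW ?(subE sF0) ?(subE1 gE sF0) //.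
have c1 (F0 : ES) : Dom (E :\ g) g PP F0 -> [set s; x] \in F0 -> [set y; t] \in F0.
  case/DomW=> sF0 nW Wg sxF; case: (char F0 sF0 nW Wg) => [[]|[_ xtF]] //.
  by rewrite (W2 sxF xtF) in nW.
have c2 (F0 : ES) : Dom (E :\ g) g PP F0 -> [set s; x] \notin F0 ->
    [/\ [set s; y] \in F0, [set x; t] \in F0 & [set y; t] \notin F0].
  case/DomW=> sF0 nW Wg sxF; case: (char F0 sF0 nW Wg) => [[]|[syF xtF]].
    by rewrite (negbTE sxF).
  split=> //; apply/negP=> ytF; by rewrite (W2 syF ytF) in nW.
pose psi (F0 : ES) := if [set s; x] \in F0 then (tperm [set s; v] [set s; x]) @: F0
                      else (tperm [set s; v] [set s; y]) @: F0.
have yt1 (F0 : ES) : Dom (E :\ g) g PP F0 -> [set s; x] \in F0 -> [set y; t] \in psi F0.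
  move=> D sxF; rewrite /psi sxF -(tpermD svyt sxyt); apply: imset_f; exact: c1.
have yt2 (F0 : ES) : Dom (E :\ g) g PP F0 -> [set s; x] \notin F0 -> [set y; t] \notin psi F0.
  move=> D sxF; rewrite /psi (negbTE sxF) -{1}(tpermD svyt syyt) mem_imset; last exact: perm_inj.
  by case: (c2 _ D sxF).
apply: (@finish g psi gE gsv).
- move=> F0 D; case/DomW: (D) => sF0 nW Wg; rewrite /psi; case: ifP => sxF.
    exact: swapP.
  case: (c2 _ D (negbT sxF)) => syF _ _; exact: swapP.
- move=> F1 F2 D1 D2.
  case: (boolP ([set s; x] \in F1)) => h1; case: (boolP ([set s; x] \in F2)) => h2.
  + by rewrite /psi h1 h2; apply: (imset_inj (@perm_inj _ _)).
  + by move=> E1; move: (yt1 _ D1 h1) (yt2 _ D2 h2); rewrite E1 => ->.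
  + by move=> E1; move: (yt1 _ D2 h2) (yt2 _ D1 h1); rewrite E1 => ->.
  + by rewrite /psi (negbTE h1) (negbTE h2); apply: (imset_inj (@perm_inj _ _)).
- move=> F0 D; apply/eqP=> E1.
  case: (boolP ([set s; x] \in F0)) => h.
    by move: (yt1 _ D h); rewrite E1 in_set1 (negbTE ytsv).
  case: (c2 _ D h) => _ xtF _.
  have : [set x; t] \in psi F0.
    rewrite /psi (negbTE h) -(tpermD svxt syxt) mem_imset //; exact: perm_inj.
  by rewrite E1 in_set1 (negbTE xtsv).
Qed.

End Main.

Theorem lemma7 (n m : nat) (E : {set {set 'I_n}}) (s t v : 'I_n) :
  5 <= n -> 5 <= m ->
  is_tgraph m E s t ->
  deg E v = 1 -> [set s; v] \in E ->
  complete_tgraph (E :\ [set s; v]) s t ->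
  exists (EH : {set {set 'I_n}}) (sH tH : 'I_n),
    is_tgraph m EH sH tH /\ stronger m 3 EH sH tH E s t.
Proof.
move=> _ Hm Hg Hdeg Hsv Hc.
case: (boolP [exists e, [exists u, [&& e \in E' E s v, u \in e & u \notin Sc E s v]]]).
- case/existsP=> e /existsP[u /and3P[H1 H2 H3]].
  by eapply caseA; eassumption.
- move=> H; eapply caseB; try eassumption.
  move=> e eE u ue; apply/negPn/negP => uS; move/negP: H; apply.
  by apply/existsP; exists e; apply/existsP; exists u; rewrite eE ue uS.
Qed.
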